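(* Let $\mathcal{A}$ be an infinite set. There exists a continuous locally finite-dimensional map $\eta:\mathfrak{S}(\mathcal{A})\to\boldsymbol{\Sigma}(\mathcal{A})$ such that $\overline{\operatorname{car}_\eta}^*(y)\subseteq\operatorname{car}(y)$ for every $y\in\mathfrak{S}(\mathcal{A})$. Consequently, if $X$ is a space and $\xi:X\to\mathfrak{S}(\mathcal{A})$ is continuous, then $\eta\circ\xi:X\to\boldsymbol{\Sigma}(\mathcal{A})$ is a continuous locally finite-dimensional map with $\overline{\operatorname{car}_{\eta\circ\xi}}^*(p)\subseteq\operatorname{car}_\xi(p)$ for every $p\in X$.
   Context: $\ell_1(\mathcal{A})$ is the Banach space of all $y:\mathcal{A}\to\mathbb{R}$ with $\|y\|_1=\sum_{\alpha}|y(\alpha)|<\infty$; $\mathbf{c}_{00}(\mathcal{A})\subseteq\ell_1(\mathcal{A})$ is the subspace of finitely supported functions. $\mathfrak{S}(\mathcal{A})=\{y\in\ell_1(\mathcal{A}): y(\alpha)\ge0\ \forall\alpha,\ \|y\|_1=1\}$ and $\boldsymbol{\Sigma}(\mathcal{A})=\mathfrak{S}(\mathcal{A})\cap\mathbf{c}_{00}(\mathcal{A})$, both with the $\|\cdot\|_1$-norm topology. $\operatorname{car}(y)=\{\alpha: y(\alpha)\neq0\}$; for a map $\zeta$ into $\mathbb{R}^{\mathcal{A}}$, $\operatorname{car}_\zeta(x)=\operatorname{car}(\zeta[x])$, where $\zeta[x]$ is the value at $x$. A map into a vector space is locally finite-dimensional if every point has an open neighbourhood mapped into a finite-dimensional linear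 subspace. For a cover $\Omega:Z\rightrightarrows\mathcal{A}$ of a space $Z$ (a map assigning nonempty subsets of $\mathcal{A}$), $\overline{\Omega}^*(p)=\bigcap\{\bigcup_{z\in U}\Omega(z): U\subseteq Z \text{ open}, p\in U\}$; equivalently $(\overline{\Omega}^* )^{-1}(\alpha)$ is the closure of $\Omega^{-1}(\alpha)=\{z:\alpha\in\Omega(z)\}$. *)

(* Defs.v *)
From HB Require Import structures.
From mathcomp Require Import all_boot all_order all_algebra.
From mathcomp Require Import all_classical all_reals topology.
From Stdlib Require List.
Set Implicit Arguments. Unset Strict Implicit. Unset Printing Implicit Defensive.
Import Order.TTheory GRing.Theory Num.Theory.
Local Open Scope ring_scope.
Local Open Scope classical_set_scope.

Section L1.
Variables (R : realType) (A : Type).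
Implicit Types (y z : A -> R) (r d : R).

Definition psum y (l : seq A) : R := \sum_(a <- l) `|y a|.

(* ||y||_1 <= r : every finite partial sum (over distinct indices) is <= r *)
Definition l1_le y r : Prop :=
  forall l : seq A, List.NoDup l -> psum y l <= r.

(* ||y||_1 < d  (sup of partial sums < d iff some r < d bounds them) *)
Definition l1_lt y d : Prop := exists2 r, r < d & l1_le y r.

Definition in_l1 y : Prop := exists r, l1_le y r.

(* ||y||_1 = 1 for nonnegative y, i.e. sup of partial sums equals 1 *)
Definition in_simplex y : Prop :=
  [/\ forall a, 0 <= y a,
      l1_le y 1 &
      forall e, 0 < e -> exists2 l : seq A, List.NoDup l & 1 - e < psum y l].

Definition fin_supp y : Prop :=
  exists l : seq A, forall a, y a != 0 -> List.In a l.

Definition in_Sigma y : Prop := in_simplex y /\ fin_supp y.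

Definition car y : set A := [set a | y a != 0].

Definition vsub y z : A -> R := fun a => y a - z a.

Definition in_fin_dim (W : set (A -> R)) : Prop :=
  exists (n : nat) (B : 'I_n -> (A -> R)),
    forall w, W w -> exists c : 'I_n -> R,
      forall a, w a = \sum_(i < n) c i * B i a.

Definition Sball y d : set (A -> R) :=
  [set z | in_simplex z /\ l1_lt (vsub z y) d].

Definition S_continuous (f : (A -> R) -> (A -> R)) : Prop :=
  forall y, in_simplex y -> forall e, 0 < e ->
    exists2 d, 0 < d & forall z, Sball y d z -> l1_lt (vsub (f z) (f y)) e.

Definition S_loc_fin_dim (f : (A -> R) -> (A -> R)) : Prop :=
  forall y, in_simplex y -> exists2 d, 0 < d & in_fin_dim (f @` Sball y d).

Definition S_car_closure (f : (A -> R) -> (A -> R)) y : set A :=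
  [set a | forall d, 0 < d -> exists2 z, Sball y d z & f z a != 0].

Definition X_continuous (X : topologicalType) (g : X -> (A -> R)) : Prop :=
  forall p : X, forall e, 0 < e ->
    exists U : set X, [/\ open U, U p &
      forall q, U q -> l1_lt (vsub (g q) (g p)) e].

Definition X_loc_fin_dim (X : topologicalType) (g : X -> (A -> R)) : Prop :=
  forall p : X, exists U : set X, [/\ open U, U p & in_fin_dim (g @` U)].

Definition X_car_closure (X : topologicalType) (g : X -> (A -> R)) (p : X)
  : set A :=
  [set a | forall U : set X, open U -> U p -> exists2 q, U q & g q a != 0].

End L1.

(* Main.v *)
Require Import Defs.
From HB Require Import structures.
From mathcomp Require Import all_boot all_order all_algebra.
From mathcomp Require Import all_classical all_reals topology.
From mathcomp Require Import ring lra.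
From Stdlib Require List.
Import Order.TTheory GRing.Theory Num.Theory.
Local Open Scope ring_scope.
Local Open Scope classical_set_scope.

Section Aux.
Variables (R : realType) (A : Type).
Implicit Types (y z f g : A -> R) (l F : seq A).

Lemma psum_nil f : psum f [::] = 0.
Proof. by rewrite /psum big_nil. Qed.

Lemma psum_cons f a l : psum f (a :: l) = `|f a| + psum f l.
Proof. by rewrite /psum big_cons. Qed.

Lemma psum_ge0 f l : 0 <= psum f l.
Proof. by rewrite /psum; apply: sumr_ge0 => i _. Qed.

Lemma coord_le f r a : l1_le f r -> `|f a| <= r.
Proof.
move=> h; have := h [:: a] (List.NoDup_cons _ (@List.in_nil _ a) (List.NoDup_nil _)).
by rewrite psum_cons psum_nil addr0.
Qed.

Lemma psum_le f g l : (forall a, `|f a| <= `|g a|) -> psum f l <= psum g l.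
Proof. by move=> h; rewrite /psum; apply: ler_sum => i _. Qed.

Lemma psum_sub f g l : psum f l <= psum g l + psum (vsub f g) l.
Proof.
rewrite /psum -big_split /=; apply: ler_sum => i _.
rewrite /vsub; have -> : f i = g i + (f i - g i) by ring.
by rewrite (_ : g i + (f i - g i) - g i = f i - g i); [apply: ler_normD | ring].
Qed.

Lemma psum_count f b l F : List.NoDup l -> (forall a, `|f a| <= b) ->
  (forall a, List.In a l -> f a != 0 -> List.In a F) ->
  psum f l <= b * (size F)%:R.
Proof.
move=> nd hb; elim: l nd F => [|x l IH] nd F hF.
  rewrite psum_nil; case: F {hF} => [|c F]; first by rewrite mulr0.
  by apply: mulr_ge0 => //; apply: le_trans (hb c).
have [nx ndl] : ~ List.In x l /\ List.NoDup l by inversion nd.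
rewrite psum_cons; have [fx0|fx0] := eqVneq (f x) 0.
  rewrite fx0 normr0 add0r; apply: IH => // a ha; apply: hF; by right.
have [F1 [F2 eF]] := List.in_split _ _ (hF x (or_introl erefl) fx0).
have : psum f l <= b * (size (F1 ++ F2))%:R.
  apply: IH => // a ha fa; have := hF a (or_intror ha) fa; rewrite eF.
  case/(List.in_app_or F1 (x :: F2) a) => [h1|[h2|h2]]; apply: List.in_or_app.
  - by left.
  - by subst a.
  - by right.
rewrite eF !size_cat /= addnS -addn1 natrD mulrDr => hl.
rewrite !natrD !mulrDr mulr1; have := hb x; lra.
Qed.

Lemma psum_lower f c l : (forall a, List.In a l -> c <= `|f a|) ->
  c * (size l)%:R <= psum f l.
Proof.
elim: l => [|x l IH] h; first by rewrite psum_nil mulr0.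
rewrite psum_cons /= -addn1 natrD mulrDr mulr1.
have := h x (or_introl erefl); have := IH (fun a ha => h a (or_intror ha)); lra.
Qed.

Lemma simplex_le1 y a : in_simplex y -> y a <= 1.
Proof.
case=> h0 h1 _; have := @coord_le y 1 a h1; by rewrite ger0_norm.
Qed.

Lemma cover y c : in_simplex y -> 0 < c ->
  exists F, forall a, c < y a -> List.In a F.
Proof.
move=> hy c0; apply: contrapT => H.
have H' : forall F, exists a, c < y a /\ ~ List.In a F.
  move=> F; apply: contrapT => hn; apply: H; exists F => a ca.
  apply: contrapT => nin; apply: hn; by exists a.
have cl : forall n, exists l, [/\ List.NoDup l, size l = n &
    forall a, List.In a l -> c < y a].
  elim=> [|n [l [nd sl hl]]]; first by exists [::]; split => //; constructor.
  have [a [ca na]] := H' l; exists (a :: l); split => /=; first by constructor.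
    by rewrite sl.
  by move=> b [<-|hb]; [|apply: hl].
have [l [nd sl hl]] := cl (Num.Def.archi_bound (1 / c)).
have hb := archi_boundP (ltW (divr_gt0 ltr01 c0)).
case: hy => h0 h1 _; have := h1 l nd.
have := @psum_lower y c l.
have : c * (1 / c) < c * (size l)%:R by rewrite ltr_pM2l // sl.
rewrite mulrA mulr1 divff ?gt_eqF //.
move=> h2 h3; have {}h3 := h3 (fun a ha => le_trans (ltW (hl a ha)) (ler_norm _)).
lra.
Qed.

Lemma exists_pos y : in_simplex y -> exists a, 0 < y a.
Proof.
move=> hy; apply: contrapT => H.
have z : forall a, y a = 0.
  move=> a; case: hy => h0 _ _; apply/eqP; rewrite eq_le h0 andbT.
  rewrite leNgt; apply/negP => ha; apply: H; by exists a.
case: hy => _ _ /(_ (1/2)) [|l _]; first lra.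
have -> : psum y l = 0 by rewrite /psum big1 // => i _; rewrite z normr0.
lra.
Qed.

Definition sY y := sup (range y).
Definition tY y := sY y / 2.
Definition wY y a := if tY y < y a then y a - tY y else 0.
Definition WY y := sup [set psum (wY y) l | l in [set l | List.NoDup l]].
Definition etaY y a := wY y a / WY y.

Lemma range_has_sup y : in_simplex y -> has_sup (range y).
Proof.
move=> hy; have [a _] := exists_pos y hy; split; first by exists (y a), a.
by exists 1 => _ [b _ <-]; apply: simplex_le1.
Qed.

Lemma s_ub y a : in_simplex y -> y a <= sY y.
Proof. by move=> hy; apply: (sup_upper_bound (range_has_sup y hy)); exists a. Qed.

Lemma s_pos y : in_simplex y -> 0 < sY y.
Proof. by move=> hy; have [a ha] := exists_pos y hy; apply: lt_le_trans ha (s_ub y a hy). Qed.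

Lemma s_adh y e : in_simplex y -> 0 < e -> exists a, sY y - e < y a.
Proof.
move=> hy e0; have [_ [a _ <-] h] := sup_adherent e0 (range_has_sup y hy).
by exists a.
Qed.

Lemma s_lip y z d : in_simplex y -> in_simplex z ->
  (forall a, `|z a - y a| <= d) -> sY z <= sY y + d.
Proof.
move=> hy hz hd; apply: ge_sup; first by have [? _] := range_has_sup z hz.
move=> _ [a _ <-]; have := s_ub y a hy; have := hd a; rewrite ler_norml; lra.
Qed.

Lemma w_ge0 y a : 0 <= wY y a.
Proof. rewrite /wY; case: ifP => // /ltW; lra. Qed.

Lemma w_le y a : in_simplex y -> 0 <= tY y -> wY y a <= y a.
Proof. move=> [h0 _ _] t0; rewrite /wY; case: ifP => _; [lra| exact: h0]. Qed.

Lemma w_neq0 y a : wY y a != 0 -> tY y < y a.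
Proof. rewrite /wY; case: ifP => //; by rewrite eqxx. Qed.

Lemma w_lip y z a : `|wY z a - wY y a| <= `|z a - y a| + `|tY z - tY y|.
Proof.
have h : `|z a - tY z - (y a - tY y)| <= `|z a - y a| + `|tY z - tY y|.
  have -> : z a - tY z - (y a - tY y) = (z a - y a) + - (tY z - tY y) by ring.
  by apply: le_trans (ler_normD _ _) _; rewrite normrN.
apply: le_trans h; rewrite /wY.
case: ifP => h1; case: ifP => h2; rewrite ?subr0 ?sub0r ?normrN //.
- move/negbT: h2; rewrite -leNgt => h2.
  rewrite ger0_norm; last lra.
  rewrite real_ler_normr ?num_real //; apply/orP; left; lra.
- move/negbT: h1; rewrite -leNgt => h1.
  rewrite ger0_norm; last lra.
  rewrite real_ler_normr ?num_real //; apply/orP; right; lra.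
- by rewrite normr0.
Qed.

Lemma t_pos y : in_simplex y -> 0 < tY y.
Proof. move=> hy; have := s_pos y hy; rewrite /tY; lra. Qed.

Lemma W_has_sup y : in_simplex y ->
  has_sup [set psum (wY y) l | l in [set l | List.NoDup l]].
Proof.
move=> hy; split; first by exists (psum (wY y) [::]), [::] => //; constructor.
exists 1 => _ [l nd <-]; apply: le_trans (_ : psum y l <= 1).
  apply: psum_le => a; rewrite !ger0_norm ?w_ge0 //; last by case: hy.
  by apply: w_le => //; apply: ltW; apply: t_pos.
by case: hy => _ h _; apply: h.
Qed.

Lemma W_ub y l : in_simplex y -> List.NoDup l -> psum (wY y) l <= WY y.
Proof. by move=> hy nd; apply: (sup_upper_bound (W_has_sup y hy)); exists l. Qed.

Lemma W_ge y a : in_simplex y -> wY y a <= WY y.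
Proof.
move=> hy; have := W_ub y [:: a] hy (List.NoDup_cons _ (@List.in_nil _ a) (List.NoDup_nil _)).
by rewrite psum_cons psum_nil addr0 ger0_norm ?w_ge0.
Qed.

Lemma W_adh y e : in_simplex y -> 0 < e ->
  exists2 l, List.NoDup l & WY y - e < psum (wY y) l.
Proof.
move=> hy e0; have [_ [l nd <-] h] := sup_adherent e0 (W_has_sup y hy).
by exists l.
Qed.

Lemma W_lip y z L : in_simplex y -> in_simplex z ->
  (forall l, List.NoDup l -> psum (vsub (wY z) (wY y)) l <= L) ->
  WY z <= WY y + L.
Proof.
move=> hy hz hL; apply: ge_sup; first by case: (W_has_sup z hz).
move=> _ [l nd <-]; apply: le_trans (psum_sub _ (wY y) l) _.
by apply: lerD; [apply: W_ub | apply: hL].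
Qed.

Lemma W_pos y : in_simplex y -> 0 < WY y.
Proof.
move=> hy; have [a ha] := s_adh y (tY y) hy (t_pos y hy).
apply: lt_le_trans (W_ge y a hy); rewrite /wY.
have h : tY y < y a by move: ha; rewrite /tY; lra.
by rewrite h subr_gt0.
Qed.

Lemma psum_div f c l : 0 < c -> psum (fun a => f a / c) l = psum f l / c.
Proof.
move=> c0; rewrite /psum mulr_suml; apply: eq_bigr => a _.
by rewrite normrM normfV (gtr0_norm c0).
Qed.

Lemma eta_Sigma y : in_simplex y -> in_Sigma (etaY y).
Proof.
move=> hy; have W0 := W_pos y hy; split; first split.
- by move=> a; rewrite /etaY divr_ge0 ?w_ge0 // ltW.
- move=> l nd; rewrite /etaY psum_div // ler_pdivrMr // mul1r.
  exact: W_ub.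
- move=> e e0; have [l nd hl] := W_adh y (e * WY y) hy (mulr_gt0 e0 W0).
  exists l => //; rewrite /etaY psum_div // ltr_pdivlMr //.
  by move: hl; rewrite mulrBl mul1r.
- have [F hF] := cover y (tY y) hy (t_pos y hy); exists F => a.
  rewrite /etaY mulf_eq0 negb_or => /andP [/w_neq0 h _]; exact: hF.
Qed.

Lemma near_t y z d : in_simplex y -> in_simplex z ->
  (forall a, `|z a - y a| <= d) -> `|tY z - tY y| <= d / 2.
Proof.
move=> hy hz hd; have h1 := s_lip y z d hy hz hd.
have h2 := s_lip z y d hz hy (fun a => (eq_ind _ (fun u => u <= d) (hd a) _ (distrC _ _))).
rewrite /tY ler_norml; lra.
Qed.

Lemma near_w y z d a : in_simplex y -> in_simplex z ->
  (forall a, `|z a - y a| <= d) -> d <= tY y / 4 ->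
  wY z a != 0 -> tY y / 2 < y a.
Proof.
move=> hy hz hd dl /w_neq0 h; have := near_t y z d hy hz hd; have := hd a.
have := t_pos y hy; rewrite !ler_norml; lra.
Qed.

Lemma near_vsub y z d a : in_simplex y -> in_simplex z ->
  (forall a, `|z a - y a| <= d) -> d <= tY y / 4 ->
  vsub (wY z) (wY y) a != 0 -> tY y / 2 < y a.
Proof.
move=> hy hz hd dl; have [hz0|hz0] := eqVneq (wY z a) 0.
  rewrite /vsub hz0 sub0r oppr_eq0 => /w_neq0; have := t_pos y hy; lra.
by move=> _; apply: (near_w y z d a hy hz hd dl hz0).
Qed.

Lemma div_est g h (G H L : R) l : 0 < G -> 0 < H ->
  psum h l <= H -> psum (vsub g h) l <= L -> `|G - H| <= L ->
  psum (vsub (fun a => g a / G) (fun a => h a / H)) l <= 2 * L / G.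
Proof.
move=> G0 H0 hH hL hGH.
have GH0 : 0 < G * H by apply: mulr_gt0.
have pt : forall a, `|g a / G - h a / H| <=
    `|g a - h a| * (1 / G) + `|h a| * (L / (G * H)).
  move=> a.
  have -> : g a / G - h a / H = (g a - h a) * (1 / G) + h a * ((H - G) / (G * H)).
    by field; apply/andP; split; apply: lt0r_neq0.
  apply: le_trans (ler_normD _ _) _; apply: lerD.
    by rewrite normrM (ger0_norm (ltW (divr_gt0 ltr01 G0))).
  rewrite normrM; apply: ler_wpM2l => //.
  rewrite normf_div (gtr0_norm GH0) ler_pM2r ?invr_gt0 //.
  by rewrite distrC.
rewrite /psum; apply: le_trans (ler_sum _ (fun a _ => pt a)) _.
rewrite big_split /= -!mulr_suml.
have e1 : (\sum_(i <- l) `|g i - h i|) * (1 / G) <= L * (1 / G).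
  by apply: ler_wpM2r => //; apply: ltW; apply: divr_gt0.
have e2 : (\sum_(i <- l) `|h i|) * (L / (G * H)) <= H * (L / (G * H)).
  apply: ler_wpM2r => //; apply: divr_ge0; last exact: ltW.
  by apply: le_trans hGH.
have e3 : H * (L / (G * H)) = L * (1 / G) by field; apply/andP; split; apply: lt0r_neq0.
have e4 : 2 * L / G = L * (1 / G) + L * (1 / G) by field; apply: lt0r_neq0.
rewrite e4; apply: lerD => //; by rewrite -e3.
Qed.

Lemma psum_vsubC f g l : psum (vsub f g) l = psum (vsub g f) l.
Proof. by rewrite /psum; apply: eq_bigr => a _; rewrite /vsub distrC. Qed.

Lemma ball_coord y z d : Sball y d z -> forall a, `|z a - y a| <= d.
Proof.
case=> _ [r rd hr] a; apply: le_trans (ltW rd).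
exact: (@coord_le (vsub z y) r a hr).
Qed.

Lemma eta_cont : S_continuous (@etaY).
Proof.
move=> y hy e e0; set tau := tY y.
have tau0 : 0 < tau := t_pos y hy.
have t2 : 0 < tau / 2 by lra.
have [F hF] := cover y (tau / 2) hy t2.
have [a0 ha0] := s_adh y (tau / 2) hy t2.
set N : R := (size F)%:R.
have N0 : 0 <= N by [].
set d := Num.min (tau / 4) (e * tau / (64 * (N + 1))).
have d0 : 0 < d.
  rewrite lt_min; apply/andP; split; first by apply: divr_gt0.
  apply: divr_gt0; [exact: mulr_gt0| lra].
have d1 : d <= tau / 4 by rewrite ge_min lexx.
have d2 : d <= e * tau / (64 * (N + 1)) by rewrite ge_min lexx orbT.
have d3 : d * (64 * (N + 1)) <= e * tau by rewrite -ler_pdivlMr //; lra.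
exists d => // z hzb; have hz : in_simplex z by case: hzb.
have hd := ball_coord y z d hzb.
have ht := near_t y z d hy hz hd; rewrite -/tau in ht.
set L := 2 * d * N.
have hf : forall l, List.NoDup l -> psum (vsub (wY z) (wY y)) l <= L.
  move=> l nd; rewrite /L /N; apply: (psum_count _ (2 * d) l F) => //.
    move=> a; apply: le_trans (w_lip y z a) _; have := hd a; lra.
  move=> a _ ha; apply: hF; exact: (near_vsub y z d a hy hz hd d1 ha).
have Wz : tau / 8 <= WY z.
  apply: le_trans (W_ge z a0 hz); rewrite /wY.
  have sy : sY y = 2 * tau by rewrite /tau /tY; field.
  move: ha0 ht (hd a0); rewrite sy !ler_norml => ha0 ht hd0.
  have -> : tY z < z a0 by lra.
  lra.
have WL : `|WY z - WY y| <= L.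
  have h1 := W_lip y z L hy hz hf.
  have h2 := W_lip z y L hz hy (fun l nd => eq_ind _ (fun u => u <= L) (hf l nd) _ (psum_vsubC _ _ l)).
  rewrite ler_norml; lra.
exists (e / 2); first lra.
move=> l nd; apply: le_trans (div_est (wY z) (wY y) (WY z) (WY y) L l (W_pos z hz) (W_pos y hy) (W_ub y l hy nd) (hf l nd) WL) _.
rewrite ler_pdivrMr; last exact: W_pos.
have : e * (tau / 8) <= e * WY z by rewrite ler_pM2l.
rewrite /L; nra.
Qed.

Lemma fin_dim_of_list F (Ws : set (A -> R)) :
  (forall w, Ws w -> forall a, w a != 0 -> List.In a F) -> in_fin_dim Ws.
Proof.
elim: F Ws => [|x F IH] Ws hW.
  exists 0%N, (fun _ _ => 0) => w hw; exists (fun _ => 0) => a.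
  rewrite big_ord0; apply/eqP; apply: contrapT => /negP h; exact: (hW w hw a h).
pose zx (w : A -> R) := fun a => if pselect (a = x) then 0 else w a.
have [n [B hB]] : in_fin_dim [set zx w | w in Ws].
  apply: IH => v [w hw ev] a; subst v; rewrite /zx.
  case: (pselect (a = x)) => [_|nax] /=; first by rewrite eqxx.
  by move=> /(hW w hw a) [e|//]; exfalso; apply: nax.
exists n.+1, (fun i => if unlift ord0 i is Some j then B j
    else fun a => if pselect (a = x) then 1 else 0) => w hw.
have [c hc] := hB (zx w) (ex_intro2 _ _ w hw erefl).
exists (fun i => if unlift ord0 i is Some j then c j else w x) => a.
rewrite big_ord_recl unlift_none.
under eq_bigr => i _ do rewrite liftK.
rewrite -hc /zx; case: (pselect (a = x)) => [ax|_] /=; first by rewrite ax mulr1 addr0.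
by rewrite mulr0 add0r.
Qed.

Lemma eta_lfd : S_loc_fin_dim (@etaY).
Proof.
move=> y hy; set tau := tY y; have tau0 : 0 < tau := t_pos y hy.
have t2 : 0 < tau / 2 by lra.
have [F hF] := cover y (tau / 2) hy t2.
exists (tau / 4); first lra.
apply: (fin_dim_of_list F) => _ [z hzb <-] a.
have hz : in_simplex z by case: hzb.
rewrite /etaY mulf_eq0 negb_or => /andP [h _]; apply: hF.
apply: (near_w y z (tau / 4) a hy hz (ball_coord y z _ hzb) (lexx _) h).
Qed.

Lemma eta_car y : in_simplex y -> S_car_closure (@etaY) y `<=` car y.
Proof.
move=> hy a ha; set tau := tY y; have tau0 : 0 < tau := t_pos y hy.
have [|z hzb hza] := ha (tau / 4); first lra.
have hz : in_simplex z by case: hzb.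
move: hza; rewrite /etaY mulf_eq0 negb_or => /andP [h _].
have := near_w y z (tau / 4) a hy hz (ball_coord y z _ hzb) (lexx _) h.
rewrite /car /=; apply: contraTneq => ->; rewrite -/tau; lra.
Qed.

Lemma in_fin_dim_sub (W1 W2 : set (A -> R)) : W1 `<=` W2 -> in_fin_dim W2 -> in_fin_dim W1.
Proof. move=> s [n [B h]]; exists n, B => w /s; exact: h. Qed.
End Aux.

Theorem theorem3p1 (R : realType) (A : Type) (hA : infinite_set [set: A]) :
  exists eta : (A -> R) -> (A -> R),
    [/\ (forall y, in_simplex y -> in_Sigma (eta y)),
        S_continuous eta,
        S_loc_fin_dim eta,
        (forall y, in_simplex y -> S_car_closure eta y `<=` car y) &
        (forall (X : topologicalType) (xi : X -> (A -> R)),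
           (forall p, in_simplex (xi p)) -> X_continuous xi ->
           [/\ (forall p, in_Sigma (eta (xi p))),
               X_continuous (eta \o xi),
               X_loc_fin_dim (eta \o xi) &
               (forall p, X_car_closure (eta \o xi) p `<=` car (xi p))])].
Proof.
exists (@etaY R A); split.
- exact: eta_Sigma.
- exact: eta_cont.
- exact: eta_lfd.
- exact: eta_car.
move=> X xi hxi cxi; split.
- by move=> p; apply: eta_Sigma.
- move=> p e e0; have [d d0 hd] := eta_cont R A (xi p) (hxi p) e e0.
  have [U [oU Up hU]] := cxi p d d0.
  exists U; split => // q Uq; apply: hd; split; [exact: hxi | exact: hU].
- move=> p; have [d d0 hfd] := eta_lfd R A (xi p) (hxi p).
  have [U [oU Up hU]] := cxi p d d0.
  exists U; split => //; apply: in_fin_dim_sub hfd.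
  move=> _ [q Uq <-]; exists (xi q) => //; split; [exact: hxi | exact: hU].
- move=> p a ha; apply: (eta_car R A (xi p) (hxi p)) => d d0.
  have [U [oU Up hU]] := cxi p d d0.
  have [q Uq hq] := ha U oU Up.
  exists (xi q) => //; split; [exact: hxi | exact: hU].
Qed.
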